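(* Let $\mathbb{F}\in\{\mathbb{R},\mathbb{C}\}$ and let $X$ be a Banach algebra over $\mathbb{F}$ with unit element $\mathbf{1}$. Let $h:X\to X$ and $\phi,\psi:X^2\to[0,\infty)$ satisfy $$\|h(xyx)-h(x)yx-xh(y)x-xyh(x)\|\le\psi(x,y),$$ $$\|h(\lambda a x+by)-\lambda A h(x)-Bh(y)\|\le\phi(x,y)$$ for all $x,y\in X$ and all $\lambda\in\Lambda$, where $a,b,A,B\in\mathbb{F}$ are fixed with $ab\neq0$ and $\Lambda\subseteq\mathbb{F}$ is nonempty. Assume there is $\xi\in\Lambda\setminus\{0\}$ such that $d:=\xi A+B=\xi a+b$ satisfies $d\neq 0$ and $d\neq 1$, and that for all $x,y\in X$: $$\Phi(x):=\sum_{k=0}^{\infty}|d|^{-k-1}\phi(d^kx,d^kx)<\infty,\qquad \liminf_{k\to\infty}|d|^{-k}\phi(d^kx,d^ky)=0,$$ $$\liminf_{k\to\infty}|d|^{-3k}\psi(d^kx,d^ky)=0,\qquad \liminf_{k\to\infty}|d|^{-2k}\psi(d^kx,y)=0.$$ Then $h$ is a Jordan triple derivation. Furthermore, if $\Lambda$ has a bounded subset $\Lambda_0$ with $\Lambda_0\in\mathcal{B}_{\mathbb{F}}$, then $h$ is a linear Jordan triple derivation.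
   Context: A Jordan triple derivation on an algebra $X$ is an additive map $D:X\to X$ with $D(xyx)=D(x)yx+xD(y)x+xyD(x)$ for all $x,y\in X$; it is linear if moreover $D(\lambda x)=\lambda D(x)$ for all scalars $\lambda$ and $x\in X$. $\mathcal{B}_{\mathbb{F}}$ denotes the family of all sets $\Lambda\subseteq\mathbb{F}$ such that every additive function $f:\mathbb{F}\to X$ which is bounded on $\Lambda$ is continuous. *)

(* Defs.v *)
From HB Require Import structures.
From mathcomp Require Import all_boot all_order all_algebra.
From mathcomp Require Import complex.
From mathcomp Require Import all_classical all_reals all_analysis.
Import numFieldTopology.Exports numFieldNormedType.Exports.
Import Order.TTheory GRing.Theory Num.Theory.
Set Implicit Arguments. Unset Strict Implicit. Unset Printing Implicit Defensive.
Local Open Scope ring_scope.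
Local Open Scope classical_set_scope.

Record banach_algebra (F : numFieldType) (X : completeNormedModType F) := {
  bmul : X -> X -> X;
  bone : X;
  bmulA : associative bmul;
  bmul1l : left_id bone bmul;
  bmul1r : right_id bone bmul;
  bmulDl : left_distributive bmul +%R;
  bmulDr : right_distributive bmul +%R;
  bmulZl : forall (c : F) (x y : X), bmul (c *: x) y = c *: bmul x y;
  bmulZr : forall (c : F) (x y : X), bmul x (c *: y) = c *: bmul x y;
  bnormM : forall x y : X, `|bmul x y| <= `|x| * `|y|
}.

Notation "x *[ M ] y" := (bmul M x y) (at level 40, left associativity,
  format "x  *[ M ]  y").

Definition additive_map (F : numFieldType) (X : completeNormedModType F)
  (D : X -> X) : Prop := forall x y : X, D (x + y) = D x + D y.

Definition jordan_triple_derivation (F : numFieldType)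
  (X : completeNormedModType F) (M : banach_algebra X) (D : X -> X) : Prop :=
  additive_map D /\
  forall x y : X,
    D (x *[M] y *[M] x) = D x *[M] y *[M] x + x *[M] D y *[M] x + x *[M] y *[M] D x.

Definition linear_jordan_triple_derivation (F : numFieldType)
  (X : completeNormedModType F) (M : banach_algebra X) (D : X -> X) : Prop :=
  jordan_triple_derivation M D /\ forall (c : F) (x : X), D (c *: x) = c *: D x.

Definition in_B_F (F : numFieldType) (X : completeNormedModType F)
  (L : set F) : Prop :=
  forall f : F -> X,
    (forall s t : F, f (s + t) = f s + f t) ->
    (exists C : F, forall s, L s -> `|f s| <= C) ->
    continuous f.

(* liminf_{k -> oo} u k = 0, for a sequence u of nonnegative scalars:
   for every N, inf_{k >= N} u k = 0. *)
Definition liminf_eq0 (F : numFieldType) (u : nat -> F) : Prop :=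
  forall e : F, 0 < e -> forall N : nat, exists2 k : nat, (N <= k)%N & u k < e.

(* Main.v *)
Require Import Defs.
From HB Require Import structures.
From mathcomp Require Import all_boot all_order all_algebra.
From mathcomp Require Import complex.
From mathcomp Require Import all_classical all_reals all_analysis.
From mathcomp Require Import ring lra.
Import numFieldTopology.Exports numFieldNormedType.Exports.
Import Order.TTheory GRing.Theory Num.Theory.
Local Open Scope ring_scope.
Local Open Scope classical_set_scope.
Section H.
Variables (F : numFieldType) (X : completeNormedModType F).

Lemma cauchy_dom (u : nat -> X) (w : nat -> F) :
  (forall k, 0 <= w k) -> cvgn (series w) ->
  (forall k, `|u k.+1 - u k| <= w k) -> cvgn u.
Proof.
move=> w0 cw uw.
have H : cvgn (series (fun k => u k.+1 - u k)).
  apply/cauchy_cvgP/cauchy_seriesP => e e0.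
  have := proj1 (cauchy_seriesP _) (@cvg_cauchy _ _ _ cw) e e0.
  move=> H1; near=> mn.
  have H : `|\sum_(mn.1 <= k < mn.2) w k| < e by near: mn; exact: H1.
  apply: le_lt_trans H.
  rewrite (le_trans (ler_norm_sum _ _ _)) //.
  rewrite ger0_norm; last by apply: sumr_ge0 => k _; exact: w0.
  by apply: ler_sum => k _; exact: uw.
have -> : u = (fun n => u 0%N + series (fun k => u k.+1 - u k) n).
  apply: funext => n; rewrite /series /= -{1}(subn0 n) big_mkord -(big_mkord xpredT (fun k => u k.+1 - u k)) telescope_sumr // subn0 addrC subrK //.
have K := (cvgP _ (@cvgD _ _ _ _ _ (fun=> u 0%N) (series (fun k => u k.+1 - u k)) _ _ (cvg_cst _) H)). exact: (K _ _).
Unshelve. all: by end_near. Qed.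

Lemma lim_liminf (u : nat -> X) (U V : X) (w : nat -> F) :
  u @ \oo --> U -> (forall k, `|u k - V| <= w k) -> liminf_eq0 w -> U = V.
Proof.
move=> uU uw lw; apply/eqP; apply/negPn/negP => UV.
have e0 : 0 < `|U - V| / 2 by rewrite divr_gt0 // normr_gt0 subr_eq0.
have := proj1 (cvgrPdist_lt _ _) uU _ e0.
case=> N _ /= HN.
have [k Nk wk] := lw _ e0 N.
have H1 := HN k Nk; have H2 := le_lt_trans (uw k) wk.
have : `|U - V| < `|U - V| / 2 + `|U - V| / 2.
  rewrite {1}(_ : U - V = (U - u k) + (u k - V)); last by rewrite addrA subrK.
  exact: le_lt_trans (ler_normD _ _) (ltrD H1 H2).
by rewrite -splitr ltxx.
Qed.

Variable M : banach_algebra X.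

Lemma bmulNl x y : (- x) *[M] y = - (x *[M] y).
Proof. by rewrite -scaleN1r bmulZl scaleN1r. Qed.
Lemma bmulNr x y : x *[M] (- y) = - (x *[M] y).
Proof. by rewrite -scaleN1r bmulZr scaleN1r. Qed.
Lemma bmulBl x y z : (x - y) *[M] z = x *[M] z - y *[M] z.
Proof. by rewrite bmulDl bmulNl. Qed.
Lemma bmulBr x y z : z *[M] (x - y) = z *[M] x - z *[M] y.
Proof. by rewrite bmulDr bmulNr. Qed.
Lemma bmul0l x : 0 *[M] x = 0.
Proof. by have H := bmulBl x x x; rewrite !subrr in H. Qed.
Lemma bmul0r x : x *[M] 0 = 0.
Proof. by have H := bmulBr x x x; rewrite !subrr in H. Qed.

Lemma norm_lt_aux (p q e : F) : 0 <= q -> 0 < e -> 0 <= p ->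
  p < e / (q + 1) -> p * q < e.
Proof.
move=> q0 e0 p0 pe.
have q1 : 0 < q + 1 by rewrite ltr_wpDl.
have H : p * q <= p * (q + 1) by apply: ler_wpM2l => //; rewrite lerDl.
apply: le_lt_trans H _.
by rewrite -ltr_pdivlMr.
Qed.

Lemma cvg_bmull (u : nat -> X) U y : u @ \oo --> U ->
  (fun k => u k *[M] y) @ \oo --> U *[M] y.
Proof.
move=> uU; apply/cvgrPdist_lt => e e0.
have e1 : 0 < e / (`|y| + 1) by rewrite divr_gt0 // ltr_wpDl.
have H := proj1 (cvgrPdist_lt _ _) uU _ e1.
near=> k. have Hk : `|U - u k| < e / (`|y| + 1) by near: k; exact: H.
rewrite -bmulBl; apply: le_lt_trans (bnormM _ _ _) _.
exact: norm_lt_aux.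
Unshelve. all: by end_near. Qed.

Lemma cvg_bmulr (u : nat -> X) U y : u @ \oo --> U ->
  (fun k => y *[M] u k) @ \oo --> y *[M] U.
Proof.
move=> uU; apply/cvgrPdist_lt => e e0.
have e1 : 0 < e / (`|y| + 1) by rewrite divr_gt0 // ltr_wpDl.
have H := proj1 (cvgrPdist_lt _ _) uU _ e1.
near=> k. have Hk : `|U - u k| < e / (`|y| + 1) by near: k; exact: H.
rewrite -bmulBr; apply: le_lt_trans (bnormM _ _ _) _.
rewrite mulrC; exact: norm_lt_aux.
Unshelve. all: by end_near. Qed.

Lemma cvgD' (u v : nat -> X) U V : u @ \oo --> U -> v @ \oo --> V ->
  (fun k => u k + v k) @ \oo --> U + V.
Proof. move=> uU vV; exact: (cvgD uU vV). Qed.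
Lemma cvgB' (u v : nat -> X) U V : u @ \oo --> U -> v @ \oo --> V ->
  (fun k => u k - v k) @ \oo --> U - V.
Proof. move=> uU vV; exact: (cvgB uU vV). Qed.
Lemma cvgZ' (u : nat -> X) U (c : F) : u @ \oo --> U ->
  (fun k => c *: u k) @ \oo --> c *: U.
Proof. move=> uU; exact: (cvgZ (cvg_cst c) uU). Qed.

Lemma cvg_mul_sub (u : nat -> X) (U : X) m : u @ \oo --> U ->
  (fun k => u (m.+1 * k)%N) @ \oo --> U.
Proof.
move=> uU; apply/(@cvgrPdist_lt _ X _ \oo _ (fun k => u (m.+1 * k)%N) U) => e e0.
have [N _ HN] := proj1 (cvgrPdist_lt _ _) uU _ e0.
exists N => // k /= Nk; apply: HN => /=.
by apply: leq_trans Nk _; rewrite leq_pmull.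
Qed.

Variable h : X -> X.
Lemma alg_a (c : F) x y : c != 0 ->
  (c^+3)^-1 *: (h ((c*:x) *[M] (c*:y) *[M] (c*:x)) - h (c*:x) *[M] (c*:y) *[M] (c*:x)
     - (c*:x) *[M] h (c*:y) *[M] (c*:x) - (c*:x) *[M] (c*:y) *[M] h (c*:x))
  = (c^+3)^-1 *: h (c^+3 *: (x *[M] y *[M] x)) - (c^-1 *: h (c *: x)) *[M] y *[M] x
     - x *[M] (c^-1 *: h (c *: y)) *[M] x - x *[M] y *[M] (c^-1 *: h (c *: x)).
Proof.
move=> c0.
rewrite !(bmulZl, bmulZr, scalerA, scalerBr).
congr (_ *: h (_ *: _) - _ *: _ - _ *: _ - _ *: _). all: rewrite ?exprS ?expr0; try (by field).
Qed.

Lemma alg_b (c : F) x y : c != 0 ->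
  (c^+2)^-1 *: (h ((c*:x) *[M] y *[M] (c*:x)) - h (c*:x) *[M] y *[M] (c*:x)
     - (c*:x) *[M] h y *[M] (c*:x) - (c*:x) *[M] y *[M] h (c*:x))
  = (c^+2)^-1 *: h (c^+2 *: (x *[M] y *[M] x)) - (c^-1 *: h (c *: x)) *[M] y *[M] x
     - x *[M] h y *[M] x - x *[M] y *[M] (c^-1 *: h (c *: x)).
Proof.
move=> c0.
rewrite -[x *[M] h y *[M] x]scale1r.
rewrite !(bmulZl, bmulZr, scalerA, scalerBr).
congr (_ *: h (_ *: _) - _ *: _ - _ *: _ - _ *: _).
all: rewrite ?exprS ?expr0; try (by field).
Qed.

Lemma alg_c (c l a b A B : F) x y : c != 0 ->
  c^-1 *: (h (l * a *: (c *: x) + b *: (c *: y)) - l * A *: h (c *: x) - B *: h (c *: y))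
  = c^-1 *: h (c *: (l * a *: x + b *: y)) - l * A *: (c^-1 *: h (c *: x))
    - B *: (c^-1 *: h (c *: y)).
Proof.
move=> c0.
rewrite !scalerBr scalerDr !scalerA.
congr (_ *: h (_ *: _ + _ *: _) - _ *: _ - _ *: _); by rewrite mulrC.
Qed.
End H.

Lemma dense_R (R : realType) (s e : R) : 0 < e -> exists q : rat, `|s - ratr q| < e.
Proof.
move=> e0; have /rat_in_itvoo [q] : s - e < s + e by lra.
rewrite in_itv /= => /andP [H1 H2]; exists q.
rewrite ltr_norml; apply/andP; split; lra.
Qed.

Lemma dense_F (R : realType) (F : numFieldType)
  (hF : F = (R : numFieldType) \/ F = (R[i] : numFieldType)) :
  exists j : F, (j = 0 \/ j * j = -1) /\
   forall s e : F, 0 < e -> exists q1 q2 : rat, `|s - (ratr q1 + ratr q2 * j)| < e.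
Proof.
case: hF => ->.
  exists 0; split; first by left.
  move=> s e e0; have [q Hq] := dense_R _ s _ e0; exists q, 0.
  by rewrite mulr0 addr0.
exists 'i%C; split; first by right; rewrite -expr2 sqr_i.
move=> s e e0.
case: e e0 => er ei; rewrite ltcE /= => /andP[/eqP ei0 er0]; subst ei.
case: s => sr si.
have e2 : 0 < er / 2 by rewrite divr_gt0.
have [q1 H1] := dense_R _ sr _ e2.
have [q2 H2] := dense_R _ si _ e2.
exists q1, q2.
rewrite -(fmorph_rat (real_complex R) q1) -(fmorph_rat (real_complex R) q2).
rewrite normc_def /= (_ : (er +i* 0)%C = (er%:C)%C); last by [].
rewrite ltcR.
rewrite !(mulr0, mul0r, mulr1, subr0, add0r, addr0).
move: (sr - ratr q1) (si - ratr q2) H1 H2 => A B HA HB.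
have H : Num.sqrt (A ^+ 2 + B ^+ 2) <= `|A| + `|B|.
  have -> : `|A| + `|B| = Num.sqrt ((`|A| + `|B|) ^+ 2).
    by rewrite sqrtr_sqr (ger0_norm (addr_ge0 (normr_ge0 A) (normr_ge0 B))).
  rewrite ler_sqrt ?sqr_ge0 // sqrrD.
  have a2 : `|A| ^+ 2 = A ^+ 2 by rewrite real_normK ?num_real.
  have b2 : `|B| ^+ 2 = B ^+ 2 by rewrite real_normK ?num_real.
  have ab : 0 <= `|A| * `|B| by rewrite mulr_ge0.
  rewrite a2 b2 -addrA lerD2l addrC lerDl.
  by rewrite mulrn_wge0.
apply: le_lt_trans H _.
rewrite [X in _ < X](splitr er).
exact: ltrD HA HB.
Qed.

Section P2.
Variables (F : numFieldType) (X : completeNormedModType F).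

Lemma natmul_eq0 (v : X) n : (0 < n)%N -> v *+ n = 0 -> v = 0.
Proof.
move=> n0; rewrite -scaler_nat => /eqP; rewrite scaler_eq0 pnatr_eq0.
by case/orP => [/eqP n00|/eqP //]; rewrite n00 in n0.
Qed.

Variable u : F -> X.
Hypothesis hu : forall s t, u (s + t) = u s + u t.

Lemma u0 : u 0 = 0.
Proof. by have := hu 0 0; rewrite addr0 => /(congr1 (fun z => z - u 0)); rewrite subrr addrK => ->. Qed.

Lemma uN s : u (- s) = - u s.
Proof. by apply/eqP; rewrite -subr_eq0 opprK -hu addNr u0. Qed.

Lemma uMn s n : u (s *+ n) = u s *+ n.
Proof. by elim: n => [|n IH]; rewrite ?mulr0n ?u0 // !mulrS hu IH. Qed.

Lemma uMz s (z : int) : u (z%:~R * s) = u s *~ z.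
Proof.
case: z => n; first by rewrite mulr_natl uMn.
by rewrite NegzE mulrNz mulNr uN mulr_natl uMn mulrNz.
Qed.

Lemma urat w q : u w = 0 -> u (ratr q * w) = 0.
Proof.
move=> uw.
have dn : (denq q)%:~R != 0 :> F by rewrite intr_eq0 denq_neq0.
have E : (denq q)%:~R * (ratr q * w) = (numq q)%:~R * w.
  by rewrite /ratr; field.
have := uMz (ratr q * w) (denq q); rewrite E uMz uw mul0rz.
have [n ->] : exists n, denq q = Posz n.+1.
  have := denq_gt0 q; case: (denq q) => [[|n]|n] //; by exists n.
move=> H; apply: (@natmul_eq0 _ n.+1) => //; by rewrite -pmulrn -H.
Qed.

Lemma cont_dense : continuous u ->
  (forall s e, 0 < e -> exists t, `|s - t| < e /\ u t = 0) -> forall s, u s = 0.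
Proof.
move=> uc dens s; apply/eqP; apply/negPn/negP => us.
have e0 : 0 < `|u s| by rewrite normr_gt0.
have := proj1 (cvgrPdist_lt _ _) (uc s) _ e0.
move=> H; have [del del0 Hdel] := proj1 (nbhs_normP _ _) (H _).
have [t [st ut]] := dens s del del0.
have := Hdel t st; rewrite /= ut subr0 ltxx //.
Qed.
End P2.

Theorem theorem2p3 (R : realType) (F : numFieldType)
  (hF : F = (R : numFieldType) \/ F = (R[i] : numFieldType))
  (X : completeNormedModType F) (M : banach_algebra X)
  (h : X -> X) (phi psi : X -> X -> F)
  (phi_ge0 : forall x y, 0 <= phi x y) (psi_ge0 : forall x y, 0 <= psi x y)
  (a b A B : F) (Lambda : set F)
  (hab : a * b != 0) (hLambda : Lambda !=set0)
  (hpsi : forall x y : X,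
     `|h (x *[M] y *[M] x) - h x *[M] y *[M] x - x *[M] h y *[M] x
        - x *[M] y *[M] h x| <= psi x y)
  (hphi : forall (x y : X) (l : F), Lambda l ->
     `|h (l * a *: x + b *: y) - l * A *: h x - B *: h y| <= phi x y)
  (xi : F) (hxiL : Lambda xi) (hxi0 : xi != 0)
  (hd : xi * A + B = xi * a + b)
  (hd0 : xi * a + b != 0) (hd1 : xi * a + b != 1)
  (hPhi : forall x : X,
     cvgn (series (fun k : nat => `|xi * a + b| ^- k.+1 *
        phi ((xi * a + b) ^+ k *: x) ((xi * a + b) ^+ k *: x))))
  (hphi_lim : forall x y : X, liminf_eq0 (fun k : nat =>
        `|xi * a + b| ^- k * phi ((xi * a + b) ^+ k *: x) ((xi * a + b) ^+ k *: y)))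
  (hpsi_lim1 : forall x y : X, liminf_eq0 (fun k : nat =>
        `|xi * a + b| ^- (3 * k) * psi ((xi * a + b) ^+ k *: x) ((xi * a + b) ^+ k *: y)))
  (hpsi_lim2 : forall x y : X, liminf_eq0 (fun k : nat =>
        `|xi * a + b| ^- (2 * k) * psi ((xi * a + b) ^+ k *: x) y)) :
  jordan_triple_derivation M h /\
  ((exists Lambda0 : set F, Lambda0 `<=` Lambda /\
      (exists C : F, forall l, Lambda0 l -> `|l| <= C) /\ in_B_F X Lambda0) ->
   linear_jordan_triple_derivation M h).

Proof.
pose d := xi * a + b.
have dn0 : d != 0 by [].
have hdx : forall x, `|h (d *: x) - d *: h x| <= phi x x.
  move=> x; have := hphi x x xi hxiL.
  by rewrite -addrA -opprD -!scalerDl hd.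
pose s := fun n x => (d ^+ n)^-1 *: h (d ^+ n *: x).
have dkn0 : forall k, d ^+ k != 0 by move=> k; rewrite expf_neq0.
have scv : forall x, cvgn (fun n => s n x).
  move=> x; apply: (@cauchy_dom _ _ _ (fun k => `|d| ^- k.+1 * phi (d^+k *: x) (d^+k *: x))).
  - by move=> k; rewrite mulr_ge0 // invr_ge0 exprn_ge0.
  - exact: hPhi x.
  - move=> k; rewrite /s.
    have -> : (d^+k.+1)^-1 *: h (d^+k.+1 *: x) - (d^+k)^-1 *: h(d^+k *: x)
       = (d^+k.+1)^-1 *: (h (d *: (d^+k *: x)) - d *: h (d^+k *: x)).
      rewrite scalerA -exprS scalerBr scalerA; congr (_ - _ *: _).
      by rewrite exprS invfM mulrAC mulVf // mul1r.
    rewrite normrZ normfV normrX; apply: ler_wpM2l; last exact: hdx.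
    by rewrite invr_ge0 exprn_ge0.
pose T := fun x => limn (fun n => s n x).
have hT : forall x, (fun n => s n x) @ \oo --> T x by move=> x; exact: scv.
have Ja : forall x y, T (x *[M] y *[M] x) - T x *[M] y *[M] x - x *[M] T y *[M] x
    - x *[M] y *[M] T x = 0.
  move=> x y.
  apply: (@lim_liminf _ _ (fun k => s (3 * k)%N (x *[M] y *[M] x) - s k x *[M] y *[M] x
     - x *[M] s k y *[M] x - x *[M] y *[M] s k x) _ 0
     (fun k => `|d| ^- (3 * k) * psi (d ^+ k *: x) (d ^+ k *: y))).
  - apply: cvgB'; [apply: cvgB'; [apply: cvgB' |] |].
    + exact: (@cvg_mul_sub _ _ _ _ 2 (hT _)).
    + apply: cvg_bmull; apply: cvg_bmull; exact: hT.
    + apply: cvg_bmull; apply: cvg_bmulr; exact: hT.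
    + apply: cvg_bmulr; exact: hT.
  - move=> k; rewrite subr0 /s.
    have := @alg_a _ _ M h _ x y (dkn0 k).
    rewrite -exprM mulnC => <-.
    rewrite normrZ normfV normrX; apply: ler_wpM2l; first by rewrite invr_ge0 exprn_ge0.
    exact: hpsi.
  - exact: hpsi_lim1.
have Jb : forall x y, T (x *[M] y *[M] x) - T x *[M] y *[M] x - x *[M] h y *[M] x
    - x *[M] y *[M] T x = 0.
  move=> x y.
  apply: (@lim_liminf _ _ (fun k => s (2 * k)%N (x *[M] y *[M] x) - s k x *[M] y *[M] x
     - x *[M] h y *[M] x - x *[M] y *[M] s k x) _ 0
     (fun k => `|d| ^- (2 * k) * psi (d ^+ k *: x) y)).
  - apply: cvgB'; [apply: cvgB'; [apply: cvgB' |] |].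
    + exact: (@cvg_mul_sub _ _ _ _ 1 (hT _)).
    + apply: cvg_bmull; apply: cvg_bmull; exact: hT.
    + exact: cvg_cst.
    + apply: cvg_bmulr; exact: hT.
  - move=> k; rewrite subr0 /s.
    have := @alg_b _ _ M h _ x y (dkn0 k).
    rewrite -exprM mulnC => <-.
    rewrite normrZ normfV normrX; apply: ler_wpM2l; first by rewrite invr_ge0 exprn_ge0.
    exact: hpsi.
  - exact: hpsi_lim2.
have hTh : forall y, T y = h y.
  move=> y; have := Ja (bone M) y; have := Jb (bone M) y.
  rewrite !(bmul1l, bmul1r).
  set p := T (bone M) *[M] y; set q := y *[M] T (bone M) => E2 E1.
  have E3 : - p - q = 0 by rewrite -E1 [T y - p - T y]addrAC subrr add0r.
  move: E2; rewrite [T y - p - h y - q]addrAC => /eqP; rewrite subr_eq0 => /eqP <-.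
  by rewrite -addrA E3 addr0.
have hrel : forall x y l, Lambda l ->
    h (l * a *: x + b *: y) = l * A *: h x + B *: h y.
  move=> x y l Ll; rewrite -!hTh.
  suff : T (l * a *: x + b *: y) - l * A *: T x - B *: T y = 0.
    by move/eqP; rewrite -addrA -opprD subr_eq0 => /eqP.
  apply: (@lim_liminf _ _ (fun k => s k (l * a *: x + b *: y) - l * A *: s k x
     - B *: s k y) _ 0
     (fun k => `|d| ^- k * phi (d ^+ k *: x) (d ^+ k *: y))).
  - apply: cvgB'; [apply: cvgB' |].
    + exact: hT.
    + apply: cvgZ'; exact: hT.
    + apply: cvgZ'; exact: hT.
  - move=> k; rewrite subr0 /s.
    rewrite -(@alg_c _ _ h _ l a b A B x y (dkn0 k)).
    rewrite normrZ normfV normrX; apply: ler_wpM2l; first by rewrite invr_ge0 exprn_ge0.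
    exact: hphi.
  - exact: hphi_lim.
have a0 : a != 0 by move: hab; rewrite mulf_eq0 negb_or => /andP[].
have b0 : b != 0 by move: hab; rewrite mulf_eq0 negb_or => /andP[].
have xa0 : xi * a != 0 by rewrite mulf_neq0.
have h0 : h 0 = 0.
  have := hrel 0 0 xi hxiL; rewrite !scaler0 addr0 -scalerDl hd -/d => E.
  have : (d - 1) *: h 0 = 0 by rewrite scalerBl -E scale1r subrr.
  move/eqP; rewrite scaler_eq0 subr_eq0 (negbTE hd1) /= => /eqP //.
have hxa : forall x, h (xi * a *: x) = xi * A *: h x.
  by move=> x; have := hrel x 0 xi hxiL; rewrite scaler0 addr0 h0 scaler0 addr0.
have hby : forall y, h (b *: y) = B *: h y.
  by move=> y; have := hrel 0 y xi hxiL; rewrite scaler0 add0r h0 scaler0 add0r.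
have hadd : additive_map h.
  move=> u v; have := hrel ((xi * a)^-1 *: u) (b^-1 *: v) xi hxiL.
  rewrite !scalerA !mulfV // !scale1r => ->.
  by rewrite -hxa -hby !scalerA !mulfV // !scale1r.
have hJ : jordan_triple_derivation M h.
  split=> // x y.
  move/eqP: (Ja x y); rewrite !hTh -!addrA -!opprD subr_eq0 => /eqP ->.
  by rewrite !addrA.
split=> //.
case=> L0 [L0sub [[C HC] BF]].
pose u := fun c : F => h (c *: bone M).
have hu : forall s t, u (s + t) = u s + u t by move=> s' t; rewrite /u scalerDl hadd.
have uc : continuous u.
  apply: BF => //; exists (C * `|A *: h (a^-1 *: bone M)|) => l Ll.
  rewrite /u (_ : l *: bone M = l * a *: (a^-1 *: bone M) + b *: 0); last first.
    by rewrite scaler0 addr0 scalerA -mulrA mulfV // mulr1.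
  rewrite hrel; last exact: L0sub.
  rewrite h0 scaler0 addr0 -scalerA normrZ; apply: ler_wpM2r => //; exact: HC.
have h1 : h (bone M) = 0.
  have := hJ.2 (bone M) (bone M); rewrite !(bmul1l, bmul1r) => E.
  apply: (@natmul_eq0 _ _ _ 2) => //; rewrite mulr2n.
  apply: (@addrI _ (h (bone M))); by rewrite addr0 addrA -E.
have usq : forall c, u (c * c) = c *: u c + c *: u c.
  move=> c; have := hJ.2 (c *: bone M) (bone M).
  rewrite h1 bmul0r bmul0l addr0 !(bmul1l, bmul1r, bmulZl, bmulZr, scalerA) => E.
  exact: E.
have [j [hj dens]] := @dense_F R F hF.
have u1 : u 1 = 0 by rewrite /u scale1r.
have uj : u j = 0.
  case: hj => [-> | jj]; first exact: u0.
  have jn0 : j != 0 by apply/eqP => j0; move: jj; rewrite j0 mulr0 => /eqP; rewrite eq_sym oppr_eq0 oner_eq0.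
  have := usq j; rewrite jj uN // u1 oppr0 -scalerDl => /esym/eqP.
  rewrite scaler_eq0 -mulr2n mulrn_eq0 (negbTE jn0) /= => /eqP //.
have uz : forall c, u c = 0.
  apply: cont_dense => // s' e e0.
  have [q1 [q2 Hq]] := dens s' e e0.
  exists (ratr q1 + ratr q2 * j); split => //.
  rewrite hu -(mulr1 (ratr q1)) !urat //.
  by rewrite addr0.
have hsq : forall w, h (w *[M] w) = h w *[M] w + w *[M] h w.
  move=> w; have := hJ.2 w (bone M).
  by rewrite h1 bmul0r bmul0l addr0 !(bmul1l, bmul1r).
split=> // c x.
have E := hsq (x + c *: bone M).
have uc0 : h (c *: bone M) = 0 := uz c.
have ucc : h ((c * c) *: bone M) = 0 := uz (c * c).
rewrite hadd uc0 addr0 !(bmulDl, bmulDr, bmulZl, bmulZr, bmul1l, bmul1r, scalerA) !hadd hsq ucc in E.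
move: E; set y := h (c *: x); set z := c *: h x.
rewrite addr0 -!addrA => /addrI; rewrite [z + (_ + z)]addrCA => /addrI E.
apply: subr0_eq; apply: (@natmul_eq0 _ _ _ 2) => //.
by rewrite mulr2n addrACA E -opprD subrr.
Qed.
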